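(* Let $d\ge1$, let $H$ be a hypergraph of $d$-intervals and let $w$ be a weight system on $H$. Then $\tau_w(H)\le 2d^2\,\nu_w(H)$.
   Context: A $d$-interval is a union of at most $d$ pairwise disjoint closed intervals of the real line $\mathbb{R}$. A hypergraph of $d$-intervals is a finite family $H$ of $d$-intervals, regarded as a hypergraph whose vertices are the points of $\mathbb{R}$ and whose edges are the members of $H$. A matching is a set of pairwise disjoint edges. A weight system on $H$ is a function $w:H\to\mathbb{N}$. $\nu_w(H)$ is the maximum of $\sum_{h\in M}w(h)$ over all matchings $M$. A $w$-cover is a finitely supported function $g:\mathbb{R}\to\mathbb{N}$ with $\sum_{v\in h}g(v)\ge w(h)$ for every $h\in H$; $\tau_w(H)$ is the minimum of $\sum_v g(v)$ over all $w$-covers. *)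

(* Defs.v *)
From Stdlib Require Import Reals List.
Import ListNotations.
Open Scope R_scope.

Definition interval := (R * R)%type.

Definition in_interval (v : R) (I : interval) : Prop := fst I <= v <= snd I.

Definition in_intervalb (v : R) (I : interval) : bool :=
  if Rle_dec (fst I) v then (if Rle_dec v (snd I) then true else false) else false.

(* A d-interval is given by the list of its (closed, nonempty, pairwise
   disjoint) component intervals; it has between 1 and d components. *)
Definition dinterval := list interval.

Definition in_dint (v : R) (h : dinterval) : Prop :=
  exists I, In I h /\ in_interval v I.

Definition in_dintb (v : R) (h : dinterval) : bool :=
  existsb (in_intervalb v) h.

Definition is_dinterval (d : nat) (h : dinterval) : Prop :=
  (1 <= length h)%nat /\ (length h <= d)%nat /\
  (forall I, In I h -> fst I <= snd I) /\
  (forall i j, (i < length h)%nat -> (j < length h)%nat -> i <> j ->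
     forall v, ~ (in_interval v (nth i h (0,0)) /\ in_interval v (nth j h (0,0)))).

(* Hypergraph: a finite family H 0, ..., H (n-1) of d-intervals;
   weight system w : index -> nat. *)

Definition dint_disjoint (h1 h2 : dinterval) : Prop :=
  forall v, ~ (in_dint v h1 /\ in_dint v h2).

Definition is_matching (n : nat) (H : nat -> dinterval) (M : list nat) : Prop :=
  NoDup M /\ (forall i, In i M -> (i < n)%nat) /\
  (forall i j, In i M -> In j M -> i <> j -> dint_disjoint (H i) (H j)).

Definition mweight (w : nat -> nat) (M : list nat) : nat := list_sum (map w M).

Definition is_nu_w (n : nat) (H : nat -> dinterval) (w : nat -> nat) (k : nat) : Prop :=
  (exists M, is_matching n H M /\ mweight w M = k) /\
  (forall M, is_matching n H M -> (mweight w M <= k)%nat).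

Definition supported_in (g : R -> nat) (S : list R) : Prop :=
  NoDup S /\ forall v, ~ In v S -> g v = 0%nat.

Definition gsum_on (g : R -> nat) (S : list R) (h : dinterval) : nat :=
  list_sum (map g (filter (fun v => in_dintb v h) S)).

Definition gtotal (g : R -> nat) (S : list R) : nat := list_sum (map g S).

Definition is_w_cover (n : nat) (H : nat -> dinterval) (w : nat -> nat)
    (g : R -> nat) (S : list R) : Prop :=
  supported_in g S /\ forall i, (i < n)%nat -> (w i <= gsum_on g S (H i))%nat.

Definition is_tau_w (n : nat) (H : nat -> dinterval) (w : nat -> nat) (t : nat) : Prop :=
  (exists g S, is_w_cover n H w g S /\ gtotal g S = t) /\
  (forall g S, is_w_cover n H w g S -> (t <= gtotal g S)%nat).

(* Main.v *)
Require Import Defs.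
From Stdlib Require Import Reals List.
From Stdlib Require Import Lra Lia Classical ClassicalEpsilon.
Import ListNotations.
Open Scope R_scope.

Fixpoint rsum (n:nat) (f:nat->R) : R :=
  match n with O => 0 | S k => rsum k f + f k end.

Lemma rsum_ext n f g : (forall i, (i < n)%nat -> f i = g i) -> rsum n f = rsum n g.
Proof. induction n; simpl; intros H; auto. rewrite IHn by (intros; apply H; lia). rewrite H by lia; auto. Qed.

Lemma rsum_le n f g : (forall i, (i < n)%nat -> f i <= g i) -> rsum n f <= rsum n g.
Proof. induction n; simpl; intros H; [lra|]. assert (H1 := H n ltac:(lia)).
  assert (rsum n f <= rsum n g) by (apply IHn; intros; apply H; lia). lra. Qed.

Lemma rsum_lt n f g : (forall i, (i < n)%nat -> f i <= g i) ->
  (exists i, (i < n)%nat /\ f i < g i) -> rsum n f < rsum n g.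
Proof. induction n; simpl; intros H [i [Hi Hlt]]; [lia|].
  destruct (Nat.eq_dec i n) as [->|Hne].
  - assert (rsum n f <= rsum n g) by (apply rsum_le; intros; apply H; lia). lra.
  - assert (rsum n f < rsum n g) by (apply IHn; [intros; apply H; lia| exists i; split; [lia|auto]]).
    assert (H1 := H n ltac:(lia)). lra. Qed.

Lemma rsum_plus n f g : rsum n (fun i => f i + g i) = rsum n f + rsum n g.
Proof. induction n; simpl; [lra|]. rewrite IHn. lra. Qed.

Lemma rsum_scal n c f : rsum n (fun i => c * f i) = c * rsum n f.
Proof. induction n; simpl; [lra|]. rewrite IHn. lra. Qed.

Lemma rsum_opp n f : rsum n (fun i => - f i) = - rsum n f.
Proof. induction n; simpl; [lra|]. rewrite IHn. lra. Qed.

Lemma rsum_zero n : rsum n (fun _ => 0) = 0.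
Proof. induction n; simpl; [lra|]. rewrite IHn. lra. Qed.

Lemma rsum_nonneg n f : (forall i, (i < n)%nat -> 0 <= f i) -> 0 <= rsum n f.
Proof. intros H. rewrite <- (rsum_zero n). apply rsum_le; auto. Qed.

Lemma rsum_term n f i : (forall i, (i < n)%nat -> 0 <= f i) -> (i < n)%nat -> f i <= rsum n f.
Proof. induction n; simpl; intros H Hi; [lia|].
  destruct (Nat.eq_dec i n) as [->|Hne].
  - assert (0 <= rsum n f) by (apply rsum_nonneg; intros; apply H; lia). lra.
  - assert (f i <= rsum n f) by (apply IHn; [intros; apply H; lia|lia]).
    assert (H1 := H n ltac:(lia)). lra. Qed.

Lemma rsum_swap n m f : rsum n (fun i => rsum m (fun j => f i j)) = rsum m (fun j => rsum n (fun i => f i j)).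
Proof. induction n; simpl.
  - rewrite rsum_zero; auto.
  - rewrite IHn. rewrite <- rsum_plus. auto. Qed.

Definition ind (P : Prop) : R := if excluded_middle_informative P then 1 else 0.

Lemma ind_nonneg P : 0 <= ind P.
Proof. unfold ind; destruct excluded_middle_informative; lra. Qed.
Lemma ind_le1 P : ind P <= 1.
Proof. unfold ind; destruct excluded_middle_informative; lra. Qed.
Lemma ind_true (P:Prop) : P -> ind P = 1.
Proof. unfold ind; destruct excluded_middle_informative; tauto. Qed.
Lemma ind_false (P:Prop) : ~P -> ind P = 0.
Proof. unfold ind; destruct excluded_middle_informative; tauto. Qed.
Lemma ind_mono (P Q : Prop) : (P -> Q) -> ind P <= ind Q.
Proof. intros H; unfold ind; do 2 destruct excluded_middle_informative; try lra; tauto. Qed.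

Definition lsumR {A} (l : list A) (f : A -> R) : R := fold_right (fun a acc => f a + acc) 0 l.

Lemma lsumR_le {A} (l : list A) f g : (forall a, In a l -> f a <= g a) -> lsumR l f <= lsumR l g.
Proof. induction l; simpl; intros H; [lra|].
  assert (f a <= g a) by auto. assert (lsumR l f <= lsumR l g) by auto. lra. Qed.

Lemma lsumR_const {A} (l : list A) c : lsumR l (fun _ => c) = INR (length l) * c.
Proof. induction l; simpl lsumR; simpl length; [simpl; lra|]. rewrite IHl, S_INR. lra. Qed.

Lemma lsumR_rsum {A} (l : list A) n f :
  rsum n (fun i => lsumR l (fun a => f a i)) = lsumR l (fun a => rsum n (fun i => f a i)).
Proof. induction l; simpl.
  - apply rsum_zero.
  - rewrite rsum_plus. rewrite IHl. auto. Qed.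

Lemma lsumR_scal {A} (l : list A) c f : lsumR l (fun a => c * f a) = c * lsumR l f.
Proof. induction l; simpl; [lra|]. rewrite IHl; lra. Qed.

Lemma ind_exists_le {A} (l : list A) (Q : A -> Prop) :
  ind (exists a, In a l /\ Q a) <= lsumR l (fun a => ind (Q a)).
Proof. induction l; simpl.
  - rewrite ind_false; [lra|]. intros [a [[] _]].
  - destruct (classic (Q a)) as [Hq|Hq].
    + rewrite (ind_true (Q a) Hq). assert (0 <= lsumR l (fun a => ind (Q a))).
      { clear IHl. induction l; simpl; [lra|]. assert (0 <= ind (Q a0)) by apply ind_nonneg. lra. }
      assert (ind (exists a0, (a = a0 \/ In a0 l) /\ Q a0) <= 1) by apply ind_le1. lra.
    + rewrite (ind_false (Q a) Hq).
      assert (ind (exists a0, (a = a0 \/ In a0 l) /\ Q a0) = ind (exists a, In a l /\ Q a)).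
      { unfold ind. do 2 destruct excluded_middle_informative; auto; exfalso.
        - destruct e as [b [[->|Hb] Hq']]; [tauto|]. apply n; eauto.
        - apply n; destruct e as [b [Hb Hq']]; eauto. }
      lra. Qed.

Lemma lsumR_lt_nonempty {A} (l : list A) f B : l <> [] -> (forall a, In a l -> f a < B) ->
  lsumR l f < INR (length l) * B.
Proof. induction l; intros Hne H; [congruence|]. simpl lsumR. simpl length. rewrite S_INR.
  destruct l.
  - simpl. assert (f a < B) by (apply H; simpl; auto). lra.
  - assert (lsumR (a0 :: l) f < INR (length (a0::l)) * B) by (apply IHl; [congruence| intros; apply H; simpl in *; tauto]).
    assert (f a < B) by (apply H; simpl; auto). lra. Qed.

Lemma lsumR_scal_r_aux {A} (l : list A) (f : A -> R) c : lsumR l (fun a => f a * c) = lsumR l f * c.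
Proof. induction l; simpl; [lra|]. rewrite IHl; lra. Qed.

Definition row := ((nat -> R) * R)%type.
Definition rdot N (a x : nat -> R) := rsum N (fun j => a j * x j).
Definition sat N (x : nat -> R) (r : row) := rdot N (fst r) x <= snd r.

Inductive cone (sys : list row) : row -> Prop :=
| cone_nil : cone sys ((fun _ => 0), 0)
| cone_cons r a b c : In r sys -> 0 <= c -> cone sys (a, b) ->
    cone sys ((fun j => c * fst r j + a j), c * snd r + b)
| cone_ext a b a' b' : cone sys (a,b) -> (forall j, a j = a' j) -> b = b' -> cone sys (a', b').

Lemma cone_add sys a1 b1 a2 b2 c : cone sys (a1,b1) -> cone sys (a2,b2) -> 0 <= c ->
  cone sys ((fun j => c * a1 j + a2 j), c * b1 + b2).
Proof.
  intros H1. remember (a1,b1) as r1. revert a1 b1 Heqr1.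
  induction H1; intros a1 b1 E H2 Hc; inversion E; subst; clear E.
  - eapply cone_ext; [exact H2| |]; intros; simpl; lra.
  - eapply cone_ext.
    + apply (cone_cons _ r (fun j => c * a j + a2 j) (c * b + b2) (c * c0)); [auto| apply Rmult_le_pos; auto|].
      apply (IHcone a b eq_refl H2 Hc).
    + intros j; simpl; lra.
    + lra.
  - match goal with | IH : forall a1 b1, (?x,?y) = (a1,b1) -> _ |- _ => eapply cone_ext; [apply (IH x y eq_refl H2 Hc)| |]; intros; simpl; try rewrite H; try lra end.
Qed.

Lemma cone_mono sys sys' r : (forall r', In r' sys' -> cone sys r') -> cone sys' r -> cone sys r.
Proof.
  intros Hs H. induction H.
  - apply cone_nil.
  - destruct r as [ra rb]. apply cone_add; auto.
  - eapply cone_ext; eauto.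
Qed.

Lemma cone_coef sys N r : (forall r', In r' sys -> fst r' N = 0) -> cone sys r -> fst r N = 0.
Proof. intros Hs H. induction H; simpl in *; auto.
  - rewrite (Hs r H), IHcone. lra.
  - rewrite <- H0; auto. Qed.

Lemma list_max {A} (l : list A) (f : A -> R) : l <> [] -> exists a, In a l /\ forall b, In b l -> f b <= f a.
Proof.
  induction l; intros Hne; [congruence|]. destruct l as [|a0 l].
  - exists a; split; simpl; auto. intros b [->|[]]; lra.
  - destruct IHl as [m [Hm Hmax]]; [congruence|].
    destruct (Rle_dec (f a) (f m)).
    + exists m; split; [simpl; auto|]. intros b [->|Hb]; auto.
    + exists a; split; [simpl; auto|]. intros b [->|Hb]; [lra|]. specialize (Hmax b Hb). lra.
Qed.

Lemma separation {A} (lp ln : list A) (U L : A -> R) :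
  (forall p q, In p lp -> In q ln -> L q <= U p) ->
  exists t, (forall q, In q ln -> L q <= t) /\ (forall p, In p lp -> t <= U p).
Proof.
  intros H. destruct ln as [|q0 ln'].
  - destruct lp as [|p0 lp'].
    + exists 0; split; intros ? [].
    + destruct (list_max (p0::lp') (fun p => - U p)) as [m [Hm Hmax]]; [congruence|].
      exists (U m); split; [intros ? []|]. intros p Hp. specialize (Hmax p Hp). lra.
  - destruct (list_max (q0::ln') L) as [m [Hm Hmax]]; [congruence|].
    exists (L m); split; [auto|]. intros p Hp; apply H; auto.
Qed.

Definition Zs N (sys : list row) := filter (fun r => if Req_EM_T (fst r N) 0 then true else false) sys.
Definition Ps N (sys : list row) := filter (fun r => if Rlt_dec 0 (fst r N) then true else false) sys.
Definition Ns N (sys : list row) := filter (fun r => if Rlt_dec (fst r N) 0 then true else false) sys.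
Definition comb N (p q : row) : row :=
  ((fun j => (- fst q N) * fst p j + fst p N * fst q j), (- fst q N) * snd p + fst p N * snd q).
Definition elim N sys := Zs N sys ++ flat_map (fun p => map (comb N p) (Ns N sys)) (Ps N sys).

Lemma in_Zs N sys r : In r (Zs N sys) <-> In r sys /\ fst r N = 0.
Proof. unfold Zs; rewrite filter_In. destruct Req_EM_T; intuition congruence. Qed.
Lemma in_Ps N sys r : In r (Ps N sys) <-> In r sys /\ 0 < fst r N.
Proof. unfold Ps; rewrite filter_In. destruct Rlt_dec; intuition congruence. Qed.
Lemma in_Ns N sys r : In r (Ns N sys) <-> In r sys /\ fst r N < 0.
Proof. unfold Ns; rewrite filter_In. destruct Rlt_dec; intuition congruence. Qed.

Lemma in_elim N sys r : In r (elim N sys) ->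
  (In r sys /\ fst r N = 0) \/ exists p q, In p (Ps N sys) /\ In q (Ns N sys) /\ r = comb N p q.
Proof.
  unfold elim; rewrite in_app_iff, in_flat_map. intros [H|[p [Hp Hq]]].
  - left; apply in_Zs; auto.
  - right. apply in_map_iff in Hq. destruct Hq as [q [<- Hq]]. exists p, q; auto.
Qed.

Lemma elim_coef N sys r : In r (elim N sys) -> fst r N = 0.
Proof. intros H; destruct (in_elim _ _ _ H) as [[_ E]|[p [q [_ [_ ->]]]]]; auto.
  simpl. lra. Qed.

Lemma elim_cone N sys r : In r (elim N sys) -> cone sys r.
Proof.
  intros H; destruct (in_elim _ _ _ H) as [[Hr _]|[p [q [Hp [Hq ->]]]]].
  - destruct r as [a b]. eapply cone_ext.
    + apply (cone_cons _ (a,b) _ _ 1 Hr ltac:(lra) (cone_nil _)).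
    + intros; simpl; lra.
    + simpl; lra.
  - apply in_Ps in Hp as [Hp Hp']. apply in_Ns in Hq as [Hq Hq'].
    destruct p as [pa pb], q as [qa qb]. simpl in *. unfold comb; simpl.
    eapply cone_ext.
    + apply (cone_cons _ (pa,pb) (fun j => pa N * qa j + 0) (pa N * qb + 0) (- qa N) Hp ltac:(lra)).
      apply (cone_cons _ (qa,qb) _ _ (pa N) Hq ltac:(lra) (cone_nil _)).
    + intros; simpl; lra.
    + simpl; lra.
Qed.

Lemma rdot_S N a x : rdot (S N) a x = rdot N a x + a N * x N.
Proof. reflexivity. Qed.

Theorem farkas : forall N sys, (forall x, ~ (forall r, In r sys -> sat N x r)) ->
  exists a b, cone sys (a,b) /\ (forall j, (j < N)%nat -> a j = 0) /\ b < 0.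
Proof.
  induction N; intros sys Hinf.
  - specialize (Hinf (fun _ => 0)). apply not_all_ex_not in Hinf. destruct Hinf as [r Hr].
    apply imply_to_and in Hr. destruct Hr as [Hr Hns]. unfold sat, rdot in Hns; simpl in Hns.
    destruct r as [a b]. exists (fun j => 1 * a j + 0), (1 * b + 0). split; [|split].
    + apply (cone_cons _ (a,b) _ _ 1 Hr ltac:(lra) (cone_nil _)).
    + intros; lia.
    + simpl in Hns. lra.
  - destruct (classic (exists x, forall r, In r (elim N sys) -> sat N x r)) as [[x' Hx']|Hn].
    + exfalso.
      set (s := fun r : row => rdot N (fst r) x').
      set (F := fun r : row => (snd r - s r) / fst r N).
      destruct (separation (Ps N sys) (Ns N sys) F F) as [t [HL HU]].
      { intros p q Hp Hq.
        assert (Hc : In (comb N p q) (elim N sys)).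
        { unfold elim. apply in_or_app; right. apply in_flat_map. exists p; split; auto. apply in_map; auto. }
        specialize (Hx' _ Hc). unfold sat in Hx'.
        apply in_Ps in Hp as [_ Hp]. apply in_Ns in Hq as [_ Hq].
        assert (E : rdot N (fst (comb N p q)) x' = (- fst q N) * s p + fst p N * s q).
        { unfold s, rdot, comb; simpl. rewrite <- !rsum_scal, <- rsum_plus. apply rsum_ext; intros; lra. }
        rewrite E in Hx'. simpl in Hx'. unfold F.
        set (cp := fst p N) in *. set (cq := fst q N) in *.
        assert (Eu : snd p - s p = cp * ((snd p - s p)/cp)) by (field; lra).
        assert (Ev : snd q - s q = cq * ((snd q - s q)/cq)) by (field; lra).
        assert (H0 : 0 <= - cq * (snd p - s p) + cp * (snd q - s q)) by lra.
        rewrite Eu, Ev in H0.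
        set (U0 := (snd p - s p)/cp) in *. set (L0 := (snd q - s q)/cq) in *.
        assert (H1 : 0 <= (cp * cq) * (L0 - U0)) by (ring_simplify; ring_simplify in H0; lra).
        destruct (Rle_dec L0 U0); auto. exfalso.
        assert (cp * cq < 0) by nra.
        assert ((cp * cq) * (L0 - U0) < 0) by (apply Rmult_neg_pos; lra). lra. }
      apply (Hinf (fun j => if Nat.eqb j N then t else x' j)).
      intros r Hr. unfold sat. rewrite rdot_S. rewrite Nat.eqb_refl.
      assert (E : rdot N (fst r) (fun j => if Nat.eqb j N then t else x' j) = s r).
      { unfold s, rdot. apply rsum_ext. intros i Hi. destruct (Nat.eqb_spec i N); [lia|auto]. }
      rewrite E.
      destruct (Rtotal_order (fst r N) 0) as [Hneg|[Hz|Hpos]].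
      * assert (Hq : In r (Ns N sys)) by (apply in_Ns; auto).
        specialize (HL r Hq). unfold F in HL.
        assert (snd r - s r = fst r N * ((snd r - s r)/fst r N)) by (field; lra).
        set (L0 := (snd r - s r) / fst r N) in *. nra.
      * assert (Hz' : In r (elim N sys)) by (unfold elim; apply in_or_app; left; apply in_Zs; auto).
        specialize (Hx' r Hz'). unfold sat in Hx'. fold (s r) in Hx'. rewrite Hz. lra.
      * assert (Hp : In r (Ps N sys)) by (apply in_Ps; auto).
        specialize (HU r Hp). unfold F in HU.
        assert (snd r - s r = fst r N * ((snd r - s r)/fst r N)) by (field; lra).
        set (U0 := (snd r - s r) / fst r N) in *. nra.
    + destruct (IHN (elim N sys)) as [a [b [Hc [Ha Hb]]]].
      { intros x Hx. apply Hn. exists x; auto. }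
      exists a, b. split; [|split; auto].
      * apply (cone_mono _ (elim N sys)); auto. intros r Hr; apply (elim_cone N); auto.
      * intros j Hj. destruct (Nat.eq_dec j N) as [->|]; [|apply Ha; lia].
        apply (cone_coef (elim N sys) N (a,b)); auto. intros r Hr; apply (elim_coef N sys); auto.
Qed.

Section LR.
Variable d n : nat.
Variable H : nat -> dinterval.
Hypothesis Hd : forall i, (i < n)%nat -> is_dinterval d (H i).

Definition meet i j := exists v, in_dint v (H i) /\ in_dint v (H j).
Definition Rr i j := exists b, In b (map snd (H i)) /\ in_dint b (H j).
Definition LoadOK (y : nat -> R) := forall i, (i < n)%nat -> forall b, In b (map snd (H i)) ->
  rsum n (fun k => ind (in_dint b (H k)) * y k) <= 1.

Lemma meet_sym i j : meet i j -> meet j i.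
Proof. intros [v [A B]]; exists v; auto. Qed.

Lemma meet_Rr i j : meet i j -> Rr i j \/ Rr j i.
Proof.
  intros [v [[I [HI vI]] [J [HJ vJ]]]]. unfold in_interval in *.
  destruct (Rle_dec (snd I) (snd J)).
  - left. exists (snd I); split; [apply in_map; auto|]. exists J; split; auto. unfold in_interval; lra.
  - right. exists (snd J); split; [apply in_map; auto|]. exists I; split; auto. unfold in_interval; lra.
Qed.

Lemma meet_self i : (i < n)%nat -> meet i i.
Proof.
  intros Hi. destruct (Hd i Hi) as [Hl [_ [Hc _]]].
  destruct (H i) as [|I l] eqn:E; simpl in Hl; [lia|].
  assert (fst I <= snd I) by (apply Hc; simpl; auto).
  unfold meet, in_dint. rewrite E. exists (fst I); split; exists I; split; simpl; auto; unfold in_interval; lra.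
Qed.

Lemma ind_meet_le i j : ind (meet i j) <= ind (Rr i j) + ind (Rr j i).
Proof.
  destruct (classic (meet i j)) as [M|M].
  - rewrite (ind_true _ M). destruct (meet_Rr _ _ M) as [R1|R1].
    + rewrite (ind_true _ R1). pose proof (ind_nonneg (Rr j i)). lra.
    + rewrite (ind_true _ R1). pose proof (ind_nonneg (Rr i j)). lra.
  - rewrite (ind_false _ M). pose proof (ind_nonneg (Rr j i)). pose proof (ind_nonneg (Rr i j)). lra.
Qed.

Lemma A_le z h : (h < n)%nat -> (forall i, (i < n)%nat -> 0 <= z i) -> LoadOK z ->
  rsum n (fun i => ind (Rr h i) * z i) <= INR d.
Proof.
  intros Hh Hz HL.
  apply Rle_trans with (rsum n (fun i => lsumR (map snd (H h)) (fun b => ind (in_dint b (H i)) * z i))).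
  - apply rsum_le. intros i Hi. rewrite lsumR_scal_r_aux. apply Rmult_le_compat_r; [auto|].
    apply ind_exists_le.
  - rewrite (lsumR_rsum (map snd (H h)) n (fun b i => ind (in_dint b (H i)) * z i)).
    apply Rle_trans with (lsumR (map snd (H h)) (fun _ => 1)).
    + apply lsumR_le. intros b Hb. apply (HL h Hh b Hb).
    + rewrite lsumR_const, length_map. rewrite Rmult_1_r. apply le_INR.
      destruct (Hd h Hh) as [_ [Hl _]]. auto.
Qed.

Lemma avg z : (forall i, (i < n)%nat -> 0 <= z i) -> LoadOK z ->
  rsum n (fun h => z h * rsum n (fun i => ind (meet h i) * z i)) <= 2 * INR d * rsum n z.
Proof.
  intros Hz HL.
  apply Rle_trans with (rsum n (fun h => z h * rsum n (fun i => ind (Rr h i) * z i)) +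
                        rsum n (fun h => z h * rsum n (fun i => ind (Rr i h) * z i))).
  { rewrite <- rsum_plus. apply rsum_le. intros h Hh. rewrite <- Rmult_plus_distr_l, <- rsum_plus.
    apply Rmult_le_compat_l; [auto|]. apply rsum_le; intros i Hi.
    rewrite <- Rmult_plus_distr_r. apply Rmult_le_compat_r; [auto|]. apply ind_meet_le. }
  assert (E : rsum n (fun h => z h * rsum n (fun i => ind (Rr i h) * z i)) =
              rsum n (fun h => z h * rsum n (fun i => ind (Rr h i) * z i))).
  { transitivity (rsum n (fun h => rsum n (fun i => z h * (ind (Rr i h) * z i)))).
    { apply rsum_ext; intros; rewrite rsum_scal; auto. }
    rewrite rsum_swap. apply rsum_ext; intros i Hi. rewrite <- rsum_scal. apply rsum_ext; intros; ring. }
  rewrite E.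
  assert (rsum n (fun h => z h * rsum n (fun i => ind (Rr h i) * z i)) <= rsum n (fun h => INR d * z h)).
  { apply rsum_le; intros h Hh. rewrite Rmult_comm. apply Rmult_le_compat_r; [auto|]. apply A_le; auto. }
  rewrite rsum_scal in H0. lra.
Qed.

End LR.

Fixpoint nsum (n : nat) (f : nat -> nat) : nat :=
  match n with O => O | S k => (nsum k f + f k)%nat end.

Lemma nsum_le n f g : (forall i, (i < n)%nat -> (f i <= g i)%nat) -> (nsum n f <= nsum n g)%nat.
Proof. induction n; simpl; intros; [lia|]. assert (f n <= g n)%nat by (apply H; lia).
  assert (nsum n f <= nsum n g)%nat by (apply IHn; intros; apply H; lia). lia. Qed.

Lemma nsum_lt n f g h : (forall i, (i < n)%nat -> (f i <= g i)%nat) -> (h < n)%nat -> (f h < g h)%nat ->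
  (nsum n f < nsum n g)%nat.
Proof. induction n; simpl; intros H Hh Hlt; [lia|].
  destruct (Nat.eq_dec h n) as [->|].
  - assert (nsum n f <= nsum n g)%nat by (apply nsum_le; intros; apply H; lia). lia.
  - assert (nsum n f < nsum n g)%nat by (apply IHn; auto; try lia; intros; apply H; lia).
    assert (f n <= g n)%nat by (apply H; lia). lia. Qed.

Lemma nat_min (Q : nat -> Prop) (w : nat -> nat) : (exists i, Q i) ->
  exists i0, Q i0 /\ forall i, Q i -> (w i0 <= w i)%nat.
Proof.
  intros [i Hi].
  assert (forall m, (exists i, Q i /\ (w i <= m)%nat) -> exists i0, Q i0 /\ forall i, Q i -> (w i0 <= w i)%nat).
  { induction m.
    - intros [j [Hj Hw]]. exists j; split; auto. intros; lia.
    - intros [j [Hj Hw]]. destruct (classic (exists i, Q i /\ (w i <= m)%nat)) as [E|E]; auto.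
      exists j; split; auto. intros k Hk. destruct (Compare_dec.le_lt_dec (w j) (w k)); auto.
      exfalso; apply E; exists k; split; auto; lia. }
  apply (H (w i)); exists i; split; auto.
Qed.

Lemma sum_map_le (l : list nat) f g : (forall x, In x l -> (f x <= g x)%nat) ->
  (list_sum (map f l) <= list_sum (map g l))%nat.
Proof. induction l; simpl; intros H; auto. assert (f a <= g a)%nat by auto.
  assert (list_sum (map f l) <= list_sum (map g l))%nat by auto. lia. Qed.

Lemma sum_le_plus (l : list nat) a f g k : In a l -> (forall x, In x l -> (f x <= g x)%nat) ->
  (f a + k <= g a)%nat -> (list_sum (map f l) + k <= list_sum (map g l))%nat.
Proof.
  induction l as [|b l IHl]; simpl; intros Ha Hle Hk; [tauto|].
  assert (Hrest : (list_sum (map f l) <= list_sum (map g l))%nat).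
  { apply sum_map_le. intros; apply Hle; simpl; auto. }
  destruct Ha as [->|Ha].
  - lia.
  - assert (list_sum (map f l) + k <= list_sum (map g l))%nat by (apply IHl; auto; intros; apply Hle; simpl; auto).
    assert (f b <= g b)%nat by (apply Hle; simpl; auto). lia.
Qed.

Lemma sum_filter_le (M : list nat) (p : nat -> bool) f g :
  (forall i, In i M -> p i = false -> f i = 0%nat) -> (forall i, In i M -> (f i <= g i)%nat) ->
  (list_sum (map f M) <= list_sum (map g (filter p M)))%nat.
Proof.
  induction M; simpl; intros H1 H2; auto.
  assert (list_sum (map f M) <= list_sum (map g (filter p M)))%nat by (apply IHM; intros; [apply H1|apply H2]; auto).
  destruct (p a) eqn:E; simpl.
  - assert (f a <= g a)%nat by auto. lia.
  - rewrite (H1 a (or_introl eq_refl) E). lia.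
Qed.

Section LR2.
Variable d n : nat.
Variable H : nat -> dinterval.
Hypothesis Hd : forall i, (i < n)%nat -> is_dinterval d (H i).

Theorem lr_main : forall m w, (nsum n w < m)%nat -> forall y, (forall i, (i < n)%nat -> 0 <= y i) ->
  LoadOK n H y -> exists M, is_matching n H M /\
    rsum n (fun i => INR (w i) * y i) <= 2 * INR d * INR (mweight w M).
Proof.
  induction m; intros w Hm y Hy HL; [lia|].
  set (z := fun i => ind (0 < w i)%nat * y i).
  assert (Hz : forall i, (i < n)%nat -> 0 <= z i).
  { intros i Hi; unfold z. apply Rmult_le_pos; [apply ind_nonneg|auto]. }
  assert (HLz : LoadOK n H z).
  { intros i Hi b Hb. eapply Rle_trans; [|apply (HL i Hi b Hb)]. apply rsum_le; intros k Hk.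
    apply Rmult_le_compat_l; [apply ind_nonneg|]. unfold z.
    pose proof (ind_le1 (0 < w k)%nat). pose proof (ind_nonneg (0 < w k)%nat). pose proof (Hy k Hk). nra. }
  destruct (classic (exists h, (h < n)%nat /\ z h <> 0)) as [[h0 [Hh0 Hzh0]]|Hall].
  2:{ exists []. split.
      - split; [constructor|]. split; intros i; simpl; tauto.
      - unfold mweight; simpl. rewrite (rsum_ext _ _ (fun _ => 0)); [rewrite rsum_zero; lra|].
        intros i Hi. destruct (Nat.eq_dec (w i) 0) as [E|E].
        + rewrite E; simpl; lra.
        + assert (z i = 0) by (destruct (classic (z i = 0)); auto; exfalso; apply Hall; eauto).
          unfold z in H0. rewrite ind_true in H0 by lia. rewrite Rmult_1_l in H0. rewrite H0. lra. }
  assert (Hgood : exists h, (h < n)%nat /\ 0 < z h /\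
            rsum n (fun i => ind (meet H h i) * z i) <= 2 * INR d).
  { apply NNPP; intros Hno.
    assert (Hlt : rsum n (fun h => z h * (2 * INR d)) < rsum n (fun h => z h * rsum n (fun i => ind (meet H h i) * z i))).
    { apply rsum_lt.
      - intros h Hh. destruct (Rle_lt_or_eq_dec 0 (z h) (Hz h Hh)) as [Hp|Hp].
        + apply Rmult_le_compat_l; [lra|]. destruct (Rle_dec (rsum n (fun i => ind (meet H h i) * z i)) (2 * INR d)); [|lra].
          exfalso; apply Hno; exists h; auto.
        + rewrite <- Hp; lra.
      - exists h0; split; auto. assert (0 < z h0) by (pose proof (Hz h0 Hh0); lra).
        apply Rmult_lt_compat_l; auto. destruct (Rle_dec (rsum n (fun i => ind (meet H h0 i) * z i)) (2 * INR d)); [|lra].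
        exfalso; apply Hno; exists h0; auto. }
    pose proof (avg d n H Hd z Hz HLz).
    assert (rsum n (fun h => z h * (2 * INR d)) = 2 * INR d * rsum n z).
    { rewrite <- rsum_scal. apply rsum_ext; intros; ring. }
    lra. }
  destruct Hgood as [h [Hh [Hzh Hsum]]].
  assert (Hwh : (0 < w h)%nat).
  { destruct (Nat.eq_dec (w h) 0) as [E|E]; [|lia]. unfold z in Hzh. rewrite ind_false in Hzh by lia. lra. }
  set (Q := fun i => (i < n)%nat /\ (0 < w i)%nat /\ meet H h i).
  destruct (nat_min Q w) as [i0 [HQi0 Hmin]].
  { exists h; split; auto; split; auto. apply meet_self with d n; auto. }
  set (eps := w i0).
  assert (Heps : (1 <= eps)%nat) by (unfold eps; destruct HQi0 as [_ [? _]]; lia).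
  set (w2 := fun i => if excluded_middle_informative (Q i) then (w i - eps)%nat else w i).
  assert (Hw2le : forall i, (w2 i <= w i)%nat).
  { intros i; unfold w2; destruct excluded_middle_informative; lia. }
  assert (HQh : Q h) by (split; auto; split; auto; apply meet_self with d n; auto).
  assert (Hlt : (nsum n w2 < nsum n w)%nat).
  { apply nsum_lt with h; auto. unfold w2. destruct excluded_middle_informative; [|tauto].
    assert (eps <= w h)%nat by (apply Hmin; auto). lia. }
  destruct (IHm w2 ltac:(lia) y Hy HL) as [M2 [HM2 HM2w]].
  assert (Edec : rsum n (fun i => INR (w i) * y i) =
     rsum n (fun i => INR (w2 i) * y i) + INR eps * rsum n (fun i => ind (meet H h i) * z i)).
  { rewrite <- rsum_scal, <- rsum_plus. apply rsum_ext; intros i Hi. unfold w2, z.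
    destruct excluded_middle_informative as [Hq|Hq].
    - destruct Hq as [_ [Hp Hm']]. rewrite (ind_true _ Hm'), (ind_true _ Hp).
      assert (eps <= w i)%nat by (apply Hmin; split; auto). rewrite minus_INR by auto. ring.
    - destruct (classic (meet H h i)) as [Hm'|Hm'].
      + assert (Hw0 : (w i = 0)%nat) by (destruct (Nat.eq_dec (w i) 0); auto; exfalso; apply Hq; split; auto; split; auto; lia).
        rewrite (ind_false (0 < w i)%nat) by lia. rewrite Hw0. simpl. ring.
      + rewrite (ind_false _ Hm'). ring. }
  assert (Hstep : exists M, is_matching n H M /\ (mweight w2 M2 + eps <= mweight w M)%nat).
  { destruct (classic (exists i, In i M2 /\ Q i)) as [[i [HiM HQi]]|Hno].
    - exists M2; split; auto. unfold mweight. apply sum_le_plus with i; auto.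
      unfold w2. destruct excluded_middle_informative; [|tauto].
      assert (eps <= w i)%nat by (apply Hmin; auto). lia.
    - set (p := fun i => if excluded_middle_informative (meet H h i) then false else true).
      exists (h :: filter p M2). destruct HM2 as [Hnd [Hlt' Hdisj]]. split.
      + split; [|split].
        * constructor; [|apply NoDup_filter; auto].
          rewrite filter_In. unfold p. destruct excluded_middle_informative as [_|Hn]; [intros [_ X]; discriminate|].
          exfalso; apply Hn; apply meet_self with d n; auto.
        * intros i [<-|Hi]; auto. apply filter_In in Hi; apply Hlt'; tauto.
        * assert (Hp : forall j, In j (filter p M2) -> In j M2 /\ ~ meet H h j).
          { intros j Hj. apply filter_In in Hj. destruct Hj as [Hj Hpj]. unfold p in Hpj.
            destruct excluded_middle_informative; [discriminate|auto]. }
          intros i j [<-|Hi] [<-|Hj] Hij; [tauto| | |].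
          -- destruct (Hp j Hj) as [_ Hm']. intros v [A B]. apply Hm'; exists v; auto.
          -- destruct (Hp i Hi) as [_ Hm']. intros v [A B]. apply Hm'; exists v; auto.
          -- apply Hdisj; auto; [apply (Hp i Hi)|apply (Hp j Hj)].
      + unfold mweight; simpl.
        assert (list_sum (map w2 M2) <= list_sum (map w (filter p M2)))%nat.
        { apply sum_filter_le.
          - intros i Hi Hpi. unfold p in Hpi. destruct excluded_middle_informative as [Hm'|]; [|discriminate].
            unfold w2. destruct excluded_middle_informative as [HQ|HQ]; [exfalso; apply Hno; eauto|].
            destruct (Nat.eq_dec (w i) 0); auto. exfalso; apply HQ. split; [apply Hlt'; auto|split; auto; lia].
          - intros; auto. }
        assert (eps <= w h)%nat by (apply Hmin; auto). fold (mweight w2 M2). unfold mweight in *. lia. }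
  destruct Hstep as [M [HM HMw]]. exists M; split; auto.
  rewrite Edec. apply le_INR in HMw. rewrite plus_INR in HMw.
  assert (INR eps * rsum n (fun i => ind (meet H h i) * z i) <= INR eps * (2 * INR d))
    by (apply Rmult_le_compat_l; [apply pos_INR|auto]).
  pose proof (pos_INR d). nra.
Qed.
End LR2.

Lemma nat_max (P : nat -> Prop) B : (exists k, P k) -> (forall k, P k -> (k <= B)%nat) ->
  exists m, P m /\ forall k, P k -> (k <= m)%nat.
Proof.
  revert P. induction B; intros P [k Hk] HB.
  - exists k; split; auto. intros j Hj. pose proof (HB j Hj). pose proof (HB k Hk). lia.
  - destruct (classic (P (S B))) as [HS|HS].
    + exists (S B); split; auto.
    + apply IHB; [eauto|]. intros j Hj. specialize (HB j Hj). destruct (Nat.eq_dec j (S B)); [subst; tauto|lia].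
Qed.

Lemma nat_floor X : 0 <= X -> exists m, INR m <= X /\ forall k, INR k <= X -> (k <= m)%nat.
Proof.
  intros HX. destruct (INR_unbounded X) as [B HB].
  apply (nat_max (fun k => INR k <= X) B).
  - exists 0%nat; simpl; auto.
  - intros k Hk. assert (INR k < INR B) by lra. apply INR_lt in H. lia.
Qed.

Lemma rsum_unit N j f : (j < N)%nat -> rsum N (fun k => if Nat.eqb k j then f k else 0) = f j.
Proof.
  induction N; intros Hj; [lia|]. simpl. destruct (Nat.eq_dec j N) as [->|Hne].
  - rewrite Nat.eqb_refl. rewrite (rsum_ext _ _ (fun _ => 0)); [rewrite rsum_zero; lra|].
    intros i Hi. destruct (Nat.eqb_spec i N); [lia|auto].
  - rewrite IHN by lia. destruct (Nat.eqb_spec N j); [lia|lra].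
Qed.

Lemma fin_argmin (Q : nat -> Prop) (f : nat -> R) N : (exists j, (j < N)%nat /\ Q j) ->
  exists j, (j < N)%nat /\ Q j /\ forall j', (j' < N)%nat -> Q j' -> f j <= f j'.
Proof.
  induction N; intros [j [Hj Hq]]; [lia|].
  destruct (classic (exists j, (j < N)%nat /\ Q j)) as [E|E].
  - destruct (IHN E) as [m [Hm [Hqm Hmin]]].
    destruct (classic (Q N /\ f N < f m)) as [[HqN Hlt]|Hn].
    + exists N; split; [lia|split; auto]. intros j' Hj' Hq'. destruct (Nat.eq_dec j' N) as [->|]; [lra|].
      specialize (Hmin j' ltac:(lia) Hq'). lra.
    + exists m; split; [lia|split; auto]. intros j' Hj' Hq'. destruct (Nat.eq_dec j' N) as [->|]; [|apply Hmin; auto; lia].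
      destruct (Rle_dec (f m) (f N)); auto. exfalso; apply Hn; split; auto; lra.
  - exists N. assert (j = N) by (destruct (Nat.eq_dec j N); auto; exfalso; apply E; exists j; split; auto; lia). subst.
    split; [lia|split; auto]. intros j' Hj' Hq'. destruct (Nat.eq_dec j' N) as [->|]; [lra|].
    exfalso; apply E; exists j'; split; auto; lia.
Qed.

Lemma in_dintb_iff v h : in_dintb v h = true <-> in_dint v h.
Proof.
  unfold in_dintb, in_dint. rewrite existsb_exists. split; intros [I [HI H]]; exists I; split; auto.
  - unfold in_intervalb, in_interval in *. destruct (Rle_dec (fst I) v); [|discriminate].
    destruct (Rle_dec v (snd I)); [|discriminate]. auto.
  - unfold in_intervalb, in_interval in *. destruct H. destruct (Rle_dec (fst I) v); [|tauto].
    destruct (Rle_dec v (snd I)); tauto.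
Qed.

Lemma length_filter_disj {A} (L : list A) p q r :
  (forall k, In k L -> r k = (p k || q k)%bool) -> (forall k, In k L -> ~ (p k = true /\ q k = true)) ->
  (length (filter p L) + length (filter q L) = length (filter r L))%nat.
Proof.
  induction L as [|a L IH]; simpl; intros H1 H2; auto.
  assert (E : (length (filter p L) + length (filter q L) = length (filter r L))%nat) by (apply IH; intros k Hk; [apply H1|apply H2]; right; auto).
  rewrite (H1 a (or_introl eq_refl)). specialize (H2 a (or_introl eq_refl)).
  destruct (p a), (q a); simpl; try lia; tauto.
Qed.

Lemma length_filter_false {A} (L : list A) p : (forall k, In k L -> p k = false) -> length (filter p L) = 0%nat.
Proof. induction L; simpl; intros H; auto. rewrite H by auto. auto. Qed.

Definition beqR (a b : R) : bool := if Req_EM_T a b then true else false.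
Definition inR (a : R) (l : list R) : bool := if in_dec Req_EM_T a l then true else false.

Lemma count_sum (l : list R) (L : list nat) (f : nat -> R) : NoDup l ->
  list_sum (map (fun v => length (filter (fun k => beqR (f k) v) L)) l) =
  length (filter (fun k => inR (f k) l) L).
Proof.
  induction l as [|v l IH]; simpl; intros Hnd.
  - symmetry. apply length_filter_false. intros; unfold inR; destruct in_dec; auto; tauto.
  - inversion Hnd; subst. rewrite IH by auto. apply length_filter_disj.
    + intros k _. unfold beqR, inR.
      destruct (Req_EM_T (f k) v) as [E|E]; destruct (in_dec Req_EM_T (f k) l) as [I|I];
        destruct (in_dec Req_EM_T (f k) (v::l)) as [J|J]; simpl; auto; exfalso;
        try (apply J; simpl; auto; fail). destruct J as [J|J]; [congruence|tauto].
    + intros k _. unfold beqR, inR. destruct Req_EM_T, in_dec; simpl; try intuition discriminate.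
      subst; tauto.
Qed.

Lemma filter_all {A} (L : list A) p : (forall k, In k L -> p k = true) -> filter p L = L.
Proof. induction L; simpl; intros H; auto. rewrite H by auto. rewrite IHL; auto. Qed.

Lemma filter_length_le {A} (L : list A) p : (length (filter p L) <= length L)%nat.
Proof. induction L; simpl; auto. destruct (p a); simpl; lia. Qed.

Lemma sum_filter_mono (l : list R) g p q : (forall v, In v l -> q v = true -> p v = true) ->
  (list_sum (map g (filter q l)) <= list_sum (map g (filter p l)))%nat.
Proof.
  induction l; simpl; intros H; auto.
  assert (list_sum (map g (filter q l)) <= list_sum (map g (filter p l)))%nat by auto.
  destruct (q a) eqn:Eq.
  - rewrite (H a (or_introl eq_refl) Eq). simpl. lia.
  - destruct (p a); simpl; lia.
Qed.

Lemma sum_nodup_const (l : list nat) k w : NoDup l -> (forall i, In i l -> i = k) ->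
  (list_sum (map w l) <= w k)%nat.
Proof.
  intros Hnd Hk. destruct l as [|a l]; simpl; [lia|].
  destruct l as [|b l].
  - simpl. rewrite (Hk a) by (simpl; auto). lia.
  - inversion Hnd; subst. exfalso. apply H1. rewrite (Hk a), (Hk b) by (simpl; auto). simpl; auto.
Qed.

Lemma sum_split (l : list nat) w p :
  list_sum (map w l) = (list_sum (map w (filter p l)) + list_sum (map w (filter (fun i => negb (p i)) l)))%nat.
Proof. induction l; simpl; auto. destruct (p a); simpl; lia. Qed.

Lemma matching_bound n (w : nat -> nat) (M : list nat) : NoDup M -> (forall i, In i M -> (i < n)%nat) ->
  (list_sum (map w M) <= nsum n w)%nat.
Proof.
  revert M. induction n; intros M Hnd Hlt.
  - destruct M as [|a M]; simpl; auto. specialize (Hlt a (or_introl eq_refl)). lia.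
  - simpl. rewrite (sum_split M w (fun i => Nat.eqb i n)).
    assert (list_sum (map w (filter (fun i => Nat.eqb i n) M)) <= w n)%nat.
    { apply sum_nodup_const; [apply NoDup_filter; auto|]. intros i Hi. apply filter_In in Hi.
      destruct Hi as [_ Hi]. apply Nat.eqb_eq; auto. }
    assert (list_sum (map w (filter (fun i => negb (Nat.eqb i n)) M)) <= nsum n w)%nat.
    { apply IHn; [apply NoDup_filter; auto|]. intros i Hi. apply filter_In in Hi. destruct Hi as [Hi Hn].
      specialize (Hlt i Hi). destruct (Nat.eqb_spec i n); simpl in Hn; [discriminate|lia]. }
    lia.
Qed.

Lemma nu_exists n H w : exists nu, is_nu_w n H w nu.
Proof.
  destruct (nat_max (fun k => exists M, is_matching n H M /\ mweight w M = k) (nsum n w)) as [m [[M [HM E]] Hmax]].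
  - exists 0%nat. exists []. split; [|reflexivity]. split; [constructor|]. split; intros i; simpl; tauto.
  - intros k [M [[Hnd [Hlt _]] <-]]. apply matching_bound; auto.
  - exists m. split; [exists M; auto|]. intros M' HM'. apply Hmax. exists M'; auto.
Qed.

Section LP.
Variable d n : nat.
Variable H : nat -> dinterval.
Variable w : nat -> nat.
Hypothesis Hd1 : (1 <= d)%nat.
Hypothesis Hd : forall i, (i < n)%nat -> is_dinterval d (H i).

Definition P0 := flat_map (fun i => map snd (H i)) (seq 0 n).
Definition Pl := nodup Req_EM_T P0.
Definition NP := length Pl.
Definition pt j := nth j Pl 0.

Lemma right_in i b : (i < n)%nat -> In b (map snd (H i)) -> exists j, (j < NP)%nat /\ pt j = b.
Proof.
  intros Hi Hb. assert (In b Pl).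
  { unfold Pl. apply nodup_In. unfold P0. apply in_flat_map. exists i; split; auto. apply in_seq; lia. }
  destruct (In_nth Pl b 0 H0) as [j [Hj E]]. exists j; split; auto.
Qed.

Lemma has_right i : (i < n)%nat -> exists b, In b (map snd (H i)) /\ in_dint b (H i).
Proof.
  intros Hi. destruct (Hd i Hi) as [Hl [_ [Hc _]]].
  destruct (H i) as [|I l] eqn:E; simpl in Hl; [lia|].
  assert (fst I <= snd I) by (apply Hc; simpl; auto).
  exists (snd I); split; [simpl; auto|]. exists I; split; [simpl; auto|]. unfold in_interval; lra.
Qed.

Variable t : R.

Definition rowA j : row := ((fun k => if Nat.eqb k j then -1 else 0), 0).
Definition rowB h : row := ((fun k => - ind (in_dint (pt k) (H h))), - INR (w h)).
Definition rowC : row := ((fun _ => 1), t).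
Definition sysLP := map rowA (seq 0 NP) ++ map rowB (seq 0 n) ++ [rowC].

Lemma cone_inv a b : cone sysLP (a,b) -> exists (al ga : nat -> R) th,
  (forall j, 0 <= al j) /\ (forall h, 0 <= ga h) /\ 0 <= th /\
  (forall k, a k = - al k - rsum n (fun h => ga h * ind (in_dint (pt k) (H h))) + th) /\
  b = - rsum n (fun h => ga h * INR (w h)) + th * t.
Proof.
  intros Hc. remember (a,b) as r. revert a b Heqr. induction Hc; intros a0 b0 E; inversion E; subst; clear E.
  - exists (fun _ => 0), (fun _ => 0), 0. repeat split; try (intros; lra).
    + intros k. rewrite (rsum_ext _ _ (fun _ => 0)) by (intros; lra). rewrite rsum_zero. lra.
    + rewrite (rsum_ext _ _ (fun _ => 0)) by (intros; lra). rewrite rsum_zero. lra.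
  - destruct (IHHc a b eq_refl) as [al [ga [th [Hal [Hga [Hth [Ha Hb]]]]]]].
    unfold sysLP in H0. rewrite !in_app_iff in H0. destruct H0 as [Hr|[Hr|Hr]].
    + apply in_map_iff in Hr. destruct Hr as [j [<- Hj]].
      exists (fun k => al k + (if Nat.eqb k j then c else 0)), ga, th.
      repeat split; auto.
      * intros k. destruct (Nat.eqb k j); specialize (Hal k); lra.
      * intros k. simpl. rewrite Ha. destruct (Nat.eqb k j); lra.
      * simpl. rewrite Hb. lra.
    + apply in_map_iff in Hr. destruct Hr as [h0 [<- Hh0]]. apply in_seq in Hh0.
      exists al, (fun h => ga h + (if Nat.eqb h h0 then c else 0)), th.
      repeat split; auto.
      * intros h. destruct (Nat.eqb h h0); specialize (Hga h); lra.
      * intros k. simpl. rewrite Ha.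
        rewrite (rsum_ext n (fun h => (ga h + (if Nat.eqb h h0 then c else 0)) * ind (in_dint (pt k) (H h))) (fun h => ga h * ind (in_dint (pt k) (H h)) +
            (if Nat.eqb h h0 then c * ind (in_dint (pt k) (H h)) else 0))).
        2:{ intros h _. destruct (Nat.eqb h h0); ring. }
        rewrite rsum_plus. rewrite (rsum_unit n h0 (fun h => c * ind (in_dint (pt k) (H h)))) by lia.
        lra.
      * simpl. rewrite Hb.
        rewrite (rsum_ext n (fun h => (ga h + (if Nat.eqb h h0 then c else 0)) * INR (w h)) (fun h => ga h * INR (w h) +
            (if Nat.eqb h h0 then c * INR (w h) else 0))).
        2:{ intros h _. destruct (Nat.eqb h h0); ring. }
        rewrite rsum_plus. rewrite (rsum_unit n h0 (fun h => c * INR (w h))) by lia. lra.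
    + destruct Hr as [<-|[]].
      exists al, ga, (th + c). repeat split; auto; try lra.
      * intros k. simpl. rewrite Ha. lra.
      * simpl. rewrite Hb. lra.
  - match goal with IH : forall a1 b1, (?x,?y) = (a1,b1) -> _ |- _ =>
      destruct (IH x y eq_refl) as [al [ga [th [Hal [Hga [Hth [Ha Hb]]]]]]] end.
    exists al, ga, th. repeat split; auto. intros k; rewrite <- H0; auto.
Qed.

Variable nu : nat.
Hypothesis Hnu : forall M, is_matching n H M -> (mweight w M <= nu)%nat.
Hypothesis Ht : t = 2 * INR d * INR nu.

Lemma frac_cover : exists x : nat -> R, (forall j, (j < NP)%nat -> 0 <= x j) /\ (forall h, (h < n)%nat -> INR (w h) <= rsum NP (fun j => ind (in_dint (pt j) (H h)) * x j)) /\ rsum NP x <= t.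
Proof.
  destruct (classic (exists x, forall r, In r sysLP -> sat NP x r)) as [[x Hx]|Hn].
  - exists x. split; [|split].
    + intros j Hj. assert (In (rowA j) sysLP).
      { unfold sysLP. apply in_or_app; left. apply in_map. apply in_seq; lia. }
      specialize (Hx _ H0). unfold sat, rdot, rowA in Hx. simpl in Hx.
      rewrite (rsum_ext _ _ (fun k => if Nat.eqb k j then - x k else 0)) in Hx.
      2:{ intros k _. destruct (Nat.eqb k j); ring. }
      rewrite (rsum_unit NP j (fun k => - x k)) in Hx by auto. lra.
    + intros h Hh. assert (In (rowB h) sysLP).
      { unfold sysLP. apply in_or_app; right. apply in_or_app; left. apply in_map. apply in_seq; lia. }
      specialize (Hx _ H0). unfold sat, rdot, rowB in Hx. simpl in Hx.
      rewrite (rsum_ext _ _ (fun k => - (ind (in_dint (pt k) (H h)) * x k))) in Hx by (intros; ring).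
      rewrite rsum_opp in Hx. lra.
    + assert (In rowC sysLP).
      { unfold sysLP. apply in_or_app; right. apply in_or_app; right. simpl; auto. }
      specialize (Hx _ H0). unfold sat, rdot, rowC in Hx. simpl in Hx.
      rewrite (rsum_ext _ _ x) in Hx by (intros; ring). auto.
  - exfalso. destruct (farkas NP sysLP) as [a [b [Hc [Ha0 Hb0]]]].
    { intros x Hx. apply Hn; eauto. }
    destruct (cone_inv a b Hc) as [al [ga [th [Hal [Hga [Hth [Ha Hb]]]]]]].
    set (L := fun k => rsum n (fun h => ga h * ind (in_dint (pt k) (H h)))).
    assert (HL : forall k, (k < NP)%nat -> L k <= th).
    { intros k Hk. specialize (Ha k). rewrite Ha0 in Ha by auto. specialize (Hal k). unfold L. lra. }
    assert (Hterm : forall h k, (h < n)%nat -> (k < NP)%nat -> in_dint (pt k) (H h) -> ga h <= L k).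
    { intros h k Hh Hk Hin. apply Rle_trans with (ga h * ind (in_dint (pt k) (H h))).
      - rewrite ind_true by auto. lra.
      - unfold L. apply (rsum_term n (fun h => ga h * ind (in_dint (pt k) (H h)))); auto.
        intros; apply Rmult_le_pos; [auto|apply ind_nonneg]. }
    destruct (Rle_lt_or_eq_dec 0 th Hth) as [Hpos|Hz].
    + set (y := fun h => ga h / th).
      assert (Hy : forall i, (i < n)%nat -> 0 <= y i).
      { intros i _. unfold y. apply Rmult_le_pos; [auto|]. left; apply Rinv_0_lt_compat; auto. }
      assert (HLy : LoadOK n H y).
      { intros i Hi b1 Hb1. destruct (right_in i b1 Hi Hb1) as [j [Hj <-]].
        rewrite (rsum_ext _ _ (fun k => / th * (ga k * ind (in_dint (pt j) (H k))))) by (intros; unfold y; field; lra).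
        rewrite rsum_scal. fold (L j). specialize (HL j Hj).
        apply Rmult_le_reg_l with th; auto. rewrite <- Rmult_assoc, Rinv_r by lra. lra. }
      destruct (lr_main d n H Hd (S (nsum n w)) w ltac:(lia) y Hy HLy) as [M [HM HMw]].
      specialize (Hnu M HM). apply le_INR in Hnu.
      assert (E : rsum n (fun i => INR (w i) * y i) = / th * rsum n (fun h => ga h * INR (w h))).
      { rewrite <- rsum_scal. apply rsum_ext; intros; unfold y; field; lra. }
      assert (2 * INR d * INR (mweight w M) <= t) by (rewrite Ht; pose proof (pos_INR d); nra).
      assert (t < / th * rsum n (fun h => ga h * INR (w h))).
      { apply Rmult_lt_reg_l with th; auto. rewrite <- Rmult_assoc, Rinv_r by lra. lra. }
      lra.
    + subst th. assert (Hz : forall h, (h < n)%nat -> ga h = 0).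
      { intros h Hh. destruct (has_right h Hh) as [b1 [Hb1 Hin]]. destruct (right_in h b1 Hh Hb1) as [j [Hj E]].
        specialize (Hterm h j Hh Hj). rewrite E in Hterm. specialize (Hterm Hin). specialize (HL j Hj).
        specialize (Hga h). lra. }
      rewrite (rsum_ext _ _ (fun _ => 0)) in Hb by (intros h Hh; rewrite Hz by auto; ring).
      rewrite rsum_zero in Hb. lra.
Qed.
End LP.

Section Round.
Variable d n : nat.
Variable H : nat -> dinterval.
Variable w : nat -> nat.
Hypothesis Hd1 : (1 <= d)%nat.
Hypothesis Hd : forall i, (i < n)%nat -> is_dinterval d (H i).
Variable x : nat -> R.
Hypothesis Hx0 : forall j, (j < NP n H)%nat -> 0 <= x j.
Hypothesis Hxc : forall h, (h < n)%nat -> INR (w h) <= rsum (NP n H) (fun j => ind (in_dint (pt n H j) (H h)) * x j).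

Local Notation PT := (pt n H).
Local Notation NN := (NP n H).

Definition Fc v := rsum NN (fun j => ind (PT j <= v) * x j).
Definition Gc v := rsum NN (fun j => ind (PT j < v) * x j).
Definition Tot := rsum NN x.

Definition Ek (k : nat) (j : nat) := (j < NN)%nat /\ INR k <= INR d * Fc (PT j) /\
  forall j', (j' < NN)%nat -> INR k <= INR d * Fc (PT j') -> PT j <= PT j'.

Definition qsel (k : nat) : nat :=
  match excluded_middle_informative (exists j, Ek k j) with
  | left e => proj1_sig (constructive_indefinite_description _ e)
  | right _ => 0%nat
  end.

Lemma qsel_spec k : (exists j, (j < NN)%nat /\ INR k <= INR d * Fc (PT j)) -> Ek k (qsel k).
Proof.
  intros E. destruct (fin_argmin (fun j => INR k <= INR d * Fc (PT j)) PT NN E) as [j [Hj [Hq Hmin]]].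
  unfold qsel. destruct excluded_middle_informative as [e|ne].
  - apply (proj2_sig (constructive_indefinite_description _ e)).
  - exfalso; apply ne. exists j; split; auto.
Qed.

Definition gK (K : nat) (v : R) : nat :=
  if in_dec Req_EM_T v (Pl n H) then length (filter (fun k => beqR (PT (qsel k)) v) (seq 1 K)) else 0%nat.

Lemma gK_sum K l : NoDup l -> (forall v, In v l -> In v (Pl n H)) ->
  list_sum (map (gK K) l) = length (filter (fun k => inR (PT (qsel k)) l) (seq 1 K)).
Proof.
  intros Hnd Hin. rewrite <- count_sum by auto. f_equal. apply map_ext_in. intros v Hv.
  unfold gK. destruct in_dec; auto. exfalso; auto.
Qed.

Lemma Tot_nonneg : 0 <= Tot.
Proof. apply rsum_nonneg; auto. Qed.

Lemma Fc_le_Tot v : Fc v <= Tot.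
Proof. unfold Fc, Tot. apply rsum_le. intros j Hj. pose proof (ind_le1 (PT j <= v)). pose proof (Hx0 j Hj). nra. Qed.

Lemma rounding : exists g S, is_w_cover n H w g S /\ INR (gtotal g S) <= INR d * Tot.
Proof.
  assert (HT : 0 <= INR d * Tot) by (apply Rmult_le_pos; [apply pos_INR|apply Tot_nonneg]).
  destruct (nat_floor _ HT) as [K [HK HKmax]].
  assert (HPnd : NoDup (Pl n H)) by apply NoDup_nodup.
  exists (gK K), (Pl n H). split; [split; [split|]|].
  - auto.
  - intros v Hv. unfold gK. destruct in_dec; tauto.
  - intros h Hh.
    set (mass := fun c : interval => rsum NN (fun j => ind (in_interval (PT j) c) * x j)).
    assert (S1 : INR (w h) <= lsumR (H h) mass).
    { eapply Rle_trans; [apply Hxc; auto|]. unfold mass. rewrite <- lsumR_rsum.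
      apply rsum_le; intros j Hj. rewrite lsumR_scal_r_aux. apply Rmult_le_compat_r; [auto|].
      apply (ind_exists_le (H h) (fun c => in_interval (PT j) c)). }
    destruct (Hd h Hh) as [Hl [Hld [Hcomp _]]].
    assert (S2 : exists c, In c (H h) /\ INR (w h) <= INR d * mass c).
    { apply NNPP; intros Hno.
      assert (lsumR (H h) (fun c => INR d * mass c) < INR (length (H h)) * INR (w h)).
      { apply lsumR_lt_nonempty; [destruct (H h); simpl in Hl; [lia|congruence]|].
        intros c Hc. destruct (Rlt_dec (INR d * mass c) (INR (w h))); auto. exfalso; apply Hno; exists c; split; auto; lra. }
      rewrite lsumR_scal in H0. apply le_INR in Hld. pose proof (pos_INR (w h)). pose proof (pos_INR d).
      assert (INR (length (H h)) * INR (w h) <= INR d * INR (w h)) by (apply Rmult_le_compat_r; auto).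
      assert (INR d * INR (w h) <= INR d * lsumR (H h) mass) by (apply Rmult_le_compat_l; auto). lra. }
    destruct S2 as [[a b] [Hc Hmass]].
    assert (Hab : a <= b) by (apply (Hcomp (a,b)); auto).
    assert (Emass : mass (a,b) = Fc b - Gc a).
    { unfold mass, Fc, Gc. unfold Rminus. rewrite <- (rsum_opp NN), <- rsum_plus. apply rsum_ext; intros j Hj.
      unfold in_interval; simpl.
      destruct (Rle_dec (PT j) b) as [H1|H1]; destruct (Rlt_dec (PT j) a) as [H2|H2].
      - rewrite (ind_false (a <= PT j <= b)) by lra. rewrite (ind_true (PT j <= b)), (ind_true (PT j < a)) by lra. ring.
      - rewrite (ind_true (a <= PT j <= b)) by lra. rewrite (ind_true (PT j <= b)), (ind_false (PT j < a)) by lra. ring.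
      - lra.
      - rewrite (ind_false (a <= PT j <= b)) by lra. rewrite (ind_false (PT j <= b)), (ind_false (PT j < a)) by lra. ring. }
    assert (HG : 0 <= INR d * Gc a).
    { apply Rmult_le_pos; [apply pos_INR|]. apply rsum_nonneg; intros j Hj.
      apply Rmult_le_pos; [apply ind_nonneg|auto]. }
    destruct (nat_floor _ HG) as [m0 [Hm0 Hm0max]].
    assert (Hm0lt : INR d * Gc a < INR m0 + 1).
    { destruct (Rlt_dec (INR d * Gc a) (INR m0 + 1)); auto. exfalso.
      assert (S m0 <= m0)%nat by (apply Hm0max; rewrite S_INR; lra). lia. }
    assert (HmK : (m0 + w h <= K)%nat).
    { apply HKmax. rewrite plus_INR. pose proof (Fc_le_Tot b). pose proof (pos_INR d).
      assert (INR d * Fc b <= INR d * Tot) by (apply Rmult_le_compat_l; auto).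
      rewrite Emass in Hmass. lra. }
    destruct (right_in d n H Hd1 h b Hh) as [jb [Hjb Ejb]].
    { change b with (snd (a,b)). apply in_map; auto. }
    assert (Hmid : forall k, In k (seq (1 + m0) (w h)) -> inR (PT (qsel k)) (filter (fun v => in_dintb v (H h)) (Pl n H)) = true).
    { intros k Hk. apply in_seq in Hk.
      assert (Hk1 : INR d * Gc a < INR k).
      { assert (INR (S m0) <= INR k) by (apply le_INR; lia). rewrite S_INR in H0. lra. }
      assert (Hk2 : INR k <= INR d * Fc b).
      { assert (INR k <= INR (m0 + w h)) by (apply le_INR; lia). rewrite plus_INR in H0.
        rewrite Emass in Hmass. lra. }
      destruct (qsel_spec k) as [Hq [Hqk Hqmin]].
      { exists jb; split; auto. rewrite Ejb; auto. }
      set (q := qsel k) in *.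
      assert (Hqb : PT q <= b) by (rewrite <- Ejb; apply Hqmin; auto; rewrite Ejb; auto).
      assert (Hqa : a <= PT q).
      { destruct (Rle_dec a (PT q)); auto. exfalso.
        assert (Fc (PT q) <= Gc a).
        { unfold Fc, Gc. apply rsum_le; intros j Hj. apply Rmult_le_compat_r; [auto|].
          apply ind_mono. intros; lra. }
        pose proof (pos_INR d). assert (INR d * Fc (PT q) <= INR d * Gc a) by (apply Rmult_le_compat_l; auto).
        lra. }
      unfold inR. destruct in_dec as [|Hn]; auto. exfalso; apply Hn.
      apply filter_In. split; [apply nth_In; auto|]. apply in_dintb_iff. exists (a,b); split; auto.
      unfold in_interval; simpl; lra. }
    unfold gsum_on. rewrite gK_sum.
    2:{ apply NoDup_filter; auto. }
    2:{ intros v Hv; apply filter_In in Hv; tauto. }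
    replace K with (m0 + (w h + (K - (m0 + w h))))%nat by lia.
    rewrite seq_app, seq_app, !filter_app, !length_app.
    rewrite (filter_all (seq (1 + m0) (w h))) by auto. rewrite length_seq. lia.
  - unfold gtotal. rewrite gK_sum by auto.
    apply Rle_trans with (INR K); auto. apply le_INR.
    eapply Nat.le_trans; [apply filter_length_le|]. rewrite length_seq; lia.
Qed.
End Round.

Theorem corollary1p10 (d : nat) (n : nat) (H : nat -> dinterval) (w : nat -> nat) :
  (1 <= d)%nat ->
  (forall i, (i < n)%nat -> is_dinterval d (H i)) ->
  exists nu tau, is_nu_w n H w nu /\ is_tau_w n H w tau /\
    (tau <= 2 * d ^ 2 * nu)%nat.
Proof.
  intros Hd1 Hd.
  destruct (nu_exists n H w) as [nu Hnu].
  destruct (frac_cover d n H w Hd1 Hd (2 * INR d * INR nu) nu (proj2 Hnu) eq_refl) as [x [Hx0 [Hxc HxT]]].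
  destruct (rounding d n H w Hd1 Hd x Hx0 Hxc) as [g [S [Hcov Htot]]].
  destruct (nat_min (fun k => exists g S, is_w_cover n H w g S /\ gtotal g S = k) (fun k => k))
    as [tau [Htau Hmin]].
  { exists (gtotal g S), g, S; auto. }
  exists nu, tau. split; auto. split.
  - split; auto. intros g' S' Hc'. apply Hmin. exists g', S'; auto.
  - assert (tau <= gtotal g S)%nat by (apply Hmin; exists g, S; auto).
    assert (INR (gtotal g S) <= INR (2 * d ^ 2 * nu)).
    { rewrite !mult_INR, pow_INR. unfold Tot in Htot. pose proof (pos_INR d).
      assert (INR d * rsum (NP n H) x <= INR d * (2 * INR d * INR nu)) by (apply Rmult_le_compat_l; auto).
      simpl. replace (INR 2) with 2 by (simpl; lra). lra. }
    apply INR_le in H1. lia.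
Qed.
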